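(* Let $K$ be a flag simplicial complex on $[m]$ that is a starshaped $(n-1)$-sphere, let $\Lambda=(\lambda_{ij})$ ($1\leqslant i\leqslant n$, $1\leqslant j\leqslant m$) be a characteristic matrix for $K$, and let $\mathcal J\subset\mathbb Z[x_1,\dots,x_m]$ be the ideal generated by the linear forms $\lambda_{i1}x_1+\cdots+\lambda_{im}x_m$, $1\leqslant i\leqslant n$. If $\mathcal J$ contains a nonzero linear form $a_ix_i+a_jx_j$ with $i\neq j$ and $a_i,a_j\in\mathbb Z$, then $K$ is a suspension.
   Context: A simplicial complex $K$ on $[m]$ is flag if every missing face (non-face all of whose proper subsets are faces) has two elements. A starshaped $(n-1)$-sphere is a triangulated sphere isomorphic to the underlying complex of a complete simplicial fan in $\mathbb R^n$. A characteristic matrix is an $n\times m$ integer matrix with columns $\boldsymbol\lambda_1,\dots,\boldsymbol\lambda_m$ such that for each face $\{i_1,\dots,i_k\}\in K$ the vectors $\boldsymbol\lambda_{i_1},\dots,\boldsymbol\lambda_{i_k}$ are part of a basis of $\mathbb Z^n$. $K$ is a suspension if $K=K_{\{a,b\}}*L$ with $\{a,b\}\notin K$ (join). (For the topological toric manifold $M(P_K,\Lambda)$ one has $H^*(M;\mathbb Z)=\mathbb Z[K]/\mathcal J$.) *)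

(* Defs.v *)
From HB Require Import structures.
From mathcomp Require Import all_boot all_order all_algebra.
From mathcomp Require Import reals.
From mathcomp Require Import mpoly.
Set Implicit Arguments. Unset Strict Implicit. Unset Printing Implicit Defensive.
Import Order.TTheory GRing.Theory Num.Theory.
Local Open Scope ring_scope.

Definition simplicial_complex (m : nat) (K : {set {set 'I_m}}) : Prop :=
  set0 \in K /\ forall s t : {set 'I_m}, s \in K -> t \subset s -> t \in K.

Definition missing_face (m : nat) (K : {set {set 'I_m}}) (s : {set 'I_m}) : Prop :=
  s \notin K /\ forall t : {set 'I_m}, t \proper s -> t \in K.

Definition flag (m : nat) (K : {set {set 'I_m}}) : Prop :=
  forall s, missing_face K s -> #|s| = 2%N.

Definition in_cone (R : realType) (n m : nat) (v : 'I_m -> 'rV[R]_n)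
    (s : {set 'I_m}) (x : 'rV[R]_n) : Prop :=
  exists c : 'I_m -> R,
    (forall j, j \in s -> 0 <= c j) /\ x = \sum_(j in s) c j *: v j.

Definition lin_indep_on (R : realType) (n m : nat) (v : 'I_m -> 'rV[R]_n)
    (s : {set 'I_m}) : Prop :=
  forall c : 'I_m -> R,
    \sum_(j in s) c j *: v j = 0 -> forall j, j \in s -> c j = 0.

(* The cones {cone(v_s) : s in K} form a complete simplicial fan in R^n
   whose rays are generated by the v j, i.e. K is (up to relabelling the
   vertices) the underlying complex of that fan. *)
Definition complete_simplicial_fan (R : realType) (n m : nat)
    (K : {set {set 'I_m}}) (v : 'I_m -> 'rV[R]_n) : Prop :=
  [/\ forall j, v j != 0,
      forall s, s \in K -> lin_indep_on v s,
      forall s t, s \in K -> t \in K ->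
        forall x, (in_cone v s x /\ in_cone v t x) <-> in_cone v (s :&: t) x
    & forall x, exists2 s, s \in K & in_cone v s x].

(* Starshaped (n-1)-sphere on vertex set [m] (no ghost vertices). *)
Definition starshaped_sphere (R : realType) (n m : nat) (K : {set {set 'I_m}}) : Prop :=
  [/\ simplicial_complex K,
      forall j : 'I_m, [set j] \in K
    & exists v : 'I_m -> 'rV[R]_n, complete_simplicial_fan K v].

(* Characteristic matrix: for every face s, the columns lambda_j (j in s)
   are part of a basis of Z^n, i.e. they occur (distinctly) among the
   columns of an invertible integer n x n matrix. *)
Definition characteristic_matrix (n m : nat) (K : {set {set 'I_m}})
    (L : 'M[int]_(n, m)) : Prop :=
  forall s, s \in K ->
    exists B : 'M[int]_n, B \in unitmx /\
    exists g : 'I_m -> 'I_n, {in s &, injective g} /\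
      forall j, j \in s -> col (g j) B = col j L.

Definition char_form (n m : nat) (L : 'M[int]_(n, m)) (i : 'I_n) : {mpoly int[m]} :=
  \sum_(j < m) (L i j)%:MP * 'X_j.

Definition in_char_ideal (n m : nat) (L : 'M[int]_(n, m)) (p : {mpoly int[m]}) : Prop :=
  exists g : 'I_n -> {mpoly int[m]}, p = \sum_(i < n) g i * char_form L i.

Definition full_subcomplex (m : nat) (K : {set {set 'I_m}}) (V : {set 'I_m}) :=
  [set s in K | s \subset V].

(* K is a suspension: K = K_{a,b} * L with {a,b} not a face, L a simplicial
   complex on the remaining vertices. *)
Definition suspension (m : nat) (K : {set {set 'I_m}}) : Prop :=
  exists a b : 'I_m, a != b /\ [set a; b] \notin K /\
    exists L : {set {set 'I_m}}, simplicial_complex L /\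
      (forall t, t \in L -> [disjoint t & [set a; b]]) /\
      K = [set s :|: t | s in full_subcomplex K [set a; b], t in L].

(* Main.v *)
Require Import Defs.
From HB Require Import structures.
From mathcomp Require Import all_boot all_order all_algebra.
From mathcomp Require Import reals.
From mathcomp Require Import mpoly.
From Stdlib Require Import Classical.
From mathcomp Require Import lra.
Import Order.TTheory GRing.Theory Num.Theory.
Local Open Scope ring_scope.

Lemma FA_zero (n m : nat) (K : {set {set 'I_m}}) (L : 'M[int]_(n, m))
   (i j : 'I_m) (ai aj : int) (s : {set 'I_m}) :
  characteristic_matrix K L ->
  in_char_ideal L (ai%:MP * 'X_i + aj%:MP * 'X_j) ->
  s \in K -> (n <= #|s|)%N -> i \notin s -> j \notin s -> i != j -> ai = 0.
Proof.
move=> hL [G hG] sK hn iS jS ij.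
have [B [Bu [g [ginj hcol]]]] := hL s sK.
pose c' := invmx B *m col i L.
pose p : 'I_m -> int := fun k => if k == i then 1 else if k \in s then - c' (g k) 0 else 0.
have hgs : g @: s = setT.
  apply/eqP; rewrite eqEcard subsetT cardsT card_ord card_in_imset //.
have Bent : forall r k, k \in s -> B r (g k) = L r k.
  move=> r k ks; have := congr1 (fun M : 'cV[int]_n => M r 0) (hcol k ks); by rewrite !mxE.
have hform : forall r, meval p (char_form L r) = 0.
  move=> r; rewrite /char_form raddf_sum /=.
  under eq_bigr => k _ do rewrite mevalM mevalC mevalXU.
  have -> : \sum_(k < m) L r k * p k = L r i - \sum_(k in s) L r k * c' (g k) 0.
    rewrite (bigD1 i) //= /p eqxx mulr1; congr (_ + _).
    rewrite (bigID (fun k => k \in s)) /= addrC big1; last first.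
      by move=> k /andP[/negPf -> /negPf ->]; rewrite mulr0.
    rewrite add0r -sumrN; apply: eq_big.
      by move=> k; apply/andP/idP => [[]//|ks]; split=> //; apply: contraTneq ks => ->.
    move=> k /andP [/negPf -> ->]; by rewrite mulrN.
  apply/eqP; rewrite subr_eq0; apply/eqP.
  transitivity (\sum_(k in s) B r (g k) * c' (g k) 0); last first.
    by apply: eq_bigr => k ks; rewrite Bent.
  rewrite -(big_imset (fun q => B r q * c' q 0)) //= hgs.
  have := congr1 (fun M : 'cV[int]_n => M r 0) (esym (mulKVmx Bu (col i L))).
  rewrite !mxE => ->; apply: eq_bigl => q; by rewrite inE.
have := congr1 (meval p) hG.
rewrite mevalD !mevalM !mevalC !mevalXU raddf_sum /= big1; last first.
  by move=> q _; rewrite mevalM hform mulr0.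
rewrite /p eqxx eq_sym (negPf ij) (negPf jS) mulr0 addr0 mulr1.
by [].
Qed.

Lemma coef_uniq (R : realType) (n m : nat) (v : 'I_m -> 'rV[R]_n) (s : {set 'I_m})
  (a b : 'I_m -> R) : lin_indep_on v s ->
  \sum_(k in s) a k *: v k = \sum_(k in s) b k *: v k -> forall k, k \in s -> a k = b k.
Proof.
move=> hi he k ks; apply/eqP; rewrite -subr_eq0; apply/eqP.
apply: (hi (fun k => a k - b k)) => //.
under eq_bigr do rewrite scalerBl.
by rewrite sumrB he subrr.
Qed.
Arguments coef_uniq {R n m v s}.

Lemma pigeon (T : eqType) (S : seq T) (P : nat -> T -> Prop) :
  (forall N, exists2 x, x \in S & P N x) ->
  exists2 x, x \in S & forall M, exists N, (M <= N)%N /\ P N x.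
Proof.
elim: S P => [|x S IH] P H.
  by case: (H 0%N).
case: (classic (forall M, exists N, (M <= N)%N /\ P N x)) => [h|h].
  by exists x; rewrite ?mem_head.
have [M0 hM0] : exists M0, forall N, (M0 <= N)%N -> ~ P N x.
  apply: NNPP => hn; apply: h => M; apply: NNPP => hn2; apply: hn.
  exists M => N hN hPN; apply: hn2; by exists N.
have H' : forall N, exists2 y, y \in S & P (N + M0)%N y.
  move=> N; have [y] := H (N + M0)%N.
  rewrite in_cons => /orP [/eqP ->|yS] hPy.
    by exfalso; apply: (hM0 (N + M0)%N) => //; rewrite leq_addl.
  by exists y.
have [y yS hy] := IH (fun N y => P (N + M0)%N y) H'.
exists y; first by rewrite in_cons yS orbT.
move=> M; have [N [hN hPN]] := hy M; exists (N + M0)%N; split => //.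
by rewrite (leq_trans hN) ?leq_addr.
Qed.

Lemma perturb (R : realType) (n m : nat) (K : {set {set 'I_m}})
  (v : 'I_m -> 'rV[R]_n) (tau : {set 'I_m}) (w : 'rV[R]_n) :
  complete_simplicial_fan K v -> tau \in K ->
  exists2 rho, rho \in K & (tau \subset rho) /\
    exists2 t : R, 0 < t & in_cone v rho (\sum_(k in tau) v k + t *: w).
Proof.
move=> [vnz hind hint hcov] tK.
set z := \sum_(k in tau) v k.
pose tt (N : nat) : R := (N.+1%:R)^-1.
have ttpos N : 0 < tt N by rewrite invr_gt0 ltr0n.
have hex : forall N, exists2 r, r \in enum K & (fun N r => r \in K /\ in_cone v r (z + tt N *: w)) N r.
  move=> N; have [r rK hr] := hcov (z + tt N *: w); exists r; by rewrite ?mem_enum.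
have [rho] := pigeon _ (enum K) _ hex.
rewrite mem_enum => rK hP.
have [N1 [_ [_ [a [a0 ha]]]]] := hP 0%N.
have [N2 [hN2 [_ [b [b0 hb]]]]] := hP N1.+1.
set t1 := tt N1; set t2 := tt N2.
have t12 : t1 - t2 != 0.
  rewrite subr_eq0; apply/eqP => e; have := congr1 GRing.inv e.
  rewrite /t1 /t2 /tt !invrK => /eqP; rewrite eqr_nat => /eqP [e'].
  by move: hN2; rewrite e' ltnn.
pose beta k := (a k - b k) / (t1 - t2).
pose alpha k := a k - t1 * beta k.
have hbeta : \sum_(k in rho) beta k *: v k = w.
  rewrite /beta; under eq_bigr => k _ do rewrite mulrC -scalerA scalerBl.
  rewrite -scaler_sumr sumrB -ha -hb opprD addrACA subrr add0r -scalerBl.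
  by rewrite scalerA mulVf // scale1r.
have halpha : \sum_(k in rho) alpha k *: v k = z.
  rewrite /alpha; under eq_bigr => k _ do rewrite scalerBl -scalerA.
  by rewrite sumrB -scaler_sumr hbeta -ha addrK.
have hc : forall N c, z + tt N *: w = \sum_(k in rho) c k *: v k ->
    forall k, k \in rho -> c k = alpha k + tt N * beta k.
  move=> N c hcN k kr.
  apply: (coef_uniq c (fun k => alpha k + tt N * beta k) (hind _ rK)) => //.
  rewrite -hcN; under eq_bigr => ? _ do rewrite scalerDl -scalerA.
  by rewrite big_split /= -scaler_sumr halpha hbeta.
have alpha0 : forall k, k \in rho -> 0 <= alpha k.
  move=> k kr; rewrite leNgt; apply/negP => an.
  pose M := Num.bound (`|beta k| / - alpha k).
  have [N [hMN [_ [c [c0 hcN]]]]] := hP M.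
  have := c0 k kr; rewrite (hc N c hcN k kr) => h.
  have hT : tt N * N.+1%:R = 1 by rewrite mulVf // pnatr_eq0.
  have hMN' : (M%:R : R) <= N.+1%:R by rewrite ler_nat (leq_trans hMN).
  have hbM : `|beta k| < M%:R * - alpha k.
    have na : 0 < - alpha k by rewrite oppr_gt0.
    have h2 : `|beta k| / - alpha k < M%:R := archi_boundP (divr_ge0 (normr_ge0 _) (ltW na)).
    have : `|beta k| / - alpha k * - alpha k < M%:R * - alpha k by rewrite ltr_pM2r.
    by rewrite divfK ?gt_eqF.
  have hbb : beta k <= `|beta k| := ler_norm _.
  have tp := ttpos N.
  set T := tt N in h hT tp.
  set A := alpha k in h an hbM.
  set Bk := beta k in h hbM hbb.
  set Nn := (N.+1%:R : R) in hT hMN'.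
  set Mm := (M%:R : R) in hMN' hbM.
  have h1 : T * Bk <= T * `|Bk| by rewrite ler_pM2l.
  have h2 : T * `|Bk| < T * (Mm * - A) by rewrite ltr_pM2l.
  have h3 : T * (Mm * - A) <= T * (Nn * - A).
    rewrite ler_pM2l // ler_pM2r //; rewrite oppr_gt0 //.
  have h4 : T * (Nn * - A) = - A by rewrite mulrA hT mul1r.
  have h0 : - A <= T * Bk by rewrite -subr_ge0 opprK addrC.
  have := le_lt_trans (le_trans h0 h1) (lt_le_trans h2 h3).
  by rewrite h4 ltxx.
have zin : in_cone v rho z.
  by exists alpha; split => //; rewrite halpha.
have zt : in_cone v tau z.
  exists (fun _ => 1); split; first by move=> *; rewrite ler01.
  by under eq_bigr do rewrite scale1r.
have [c [_ hcz]] := (hint rho tau rK tK z).1 (conj zin zt).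
exists rho => //; split; last first.
  exists t1; first exact: ttpos.
  by exists a; split.
apply/subsetP => k kt; apply: contraT => kn.
suff : (fun _ => 1 : R) k = (fun k => if k \in rho then c k else 0) k.
  by rewrite /= (negPf kn) => /eqP; rewrite oner_eq0.
apply: (coef_uniq (fun _ => 1 : R) (fun k => if k \in rho then c k else 0) (hind _ tK)) => //.
transitivity (\sum_(k in rho :&: tau) c k *: v k).
  by rewrite -hcz; under eq_bigr do rewrite scale1r.
symmetry; rewrite (bigID (fun k => k \in rho) (fun k => k \in tau)) /=.
rewrite [X in _ + X]big1 ?addr0; last by move=> k' /andP[_ /negPf ->]; rewrite scale0r.
apply: eq_big => [k'|k' /andP[_ ->]] //; by rewrite inE andbC.
Qed.

Arguments perturb {R n m K v tau} w.

Lemma not_span (R : realType) (n m : nat) (v : 'I_m -> 'rV[R]_n) (s : {set 'I_m}) :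
  (#|s| < n)%N -> exists w : 'rV[R]_n, forall c : 'I_m -> R, w != \sum_(k in s) c k *: v k.
Proof.
move=> hs; apply: NNPP => hn.
have hall : forall w : 'rV[R]_n, exists c : 'I_m -> R, w = \sum_(k in s) c k *: v k.
  move=> w; apply: NNPP => h1; apply: hn; exists w => c; apply/eqP => e; apply: h1; by exists c.
pose M := \matrix_(a < #|s|) v (enum_val a).
have vin : forall k, k \in s -> (v k <= M)%MS.
  move=> k ks; have := row_sub (enum_rank_in ks k) M.
  by rewrite rowK enum_rankK_in.
have : ((1%:M : 'M[R]_n) <= M)%MS.
  apply/row_subP => r; have [c ->] := hall (row r 1%:M).
  apply: summx_sub => k ks; exact: scalemx_sub (vin k ks).
move/mxrankS; rewrite mxrank1 => h; have := leq_trans h (rank_leq_row M).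
by rewrite leqNgt hs.
Qed.
Arguments not_span {R n m} v {s}.

Lemma pure (R : realType) (n m : nat) (K : {set {set 'I_m}}) (v : 'I_m -> 'rV[R]_n) :
  complete_simplicial_fan K v -> forall s, s \in K ->
  exists2 sg, sg \in K & (s \subset sg) && (n <= #|sg|)%N.
Proof.
move=> hf s sK.
pose S := [set sg in K | s \subset sg].
have sS : s \in S by rewrite inE sK subxx.
case: (@arg_maxnP _ s (fun sg => sg \in S) (fun sg => #|sg|) sS) => sg.
rewrite inE => /andP[sgK ssg] hmax.
exists sg => //; rewrite ssg /= leqNgt; apply/negP => hlt.
have [w hw] := not_span v hlt.
have [rho rK [sgr [t tp [c [c0 hc]]]]] := perturb w hf sgK.
case: (eqVneq rho sg) => [e|ne].
  subst rho; move/eqP: (hw (fun k => t^-1 * (c k - 1))); apply.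
  under eq_bigr => k _ do rewrite -scalerA scalerBl scale1r.
  rewrite -scaler_sumr sumrB -hc [_ + t *: w]addrC addrK scalerA mulVf ?gt_eqF //.
  by rewrite scale1r.
have := hmax rho; rewrite inE rK (subset_trans ssg sgr) => /(_ isT).
have := proper_card (A := sg) (B := rho); rewrite properEneq eq_sym ne sgr.
by move=> /(_ isT) h1 h2; move: (leq_trans h1 h2); rewrite ltnn.
Qed.

Lemma pm (R : realType) (n m : nat) (K : {set {set 'I_m}}) (v : 'I_m -> 'rV[R]_n) :
  simplicial_complex K -> complete_simplicial_fan K v ->
  forall tau x, tau \in K -> x \notin tau -> x |: tau \in K ->
  exists2 y, (y \notin tau) && (y != x) & y |: tau \in K.
Proof.
move=> [_ hdown] hf tau x tK xt xtK.
have hf' := hf; case: hf' => [_ hind _ _].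
have [rho rK [tr [t tp [c [c0 hc]]]]] := perturb (- v x) hf tK.
have xr : x \notin rho.
  apply/negP => xr.
  pose d k := (if k \in tau then 1 else 0) - (if k == x then t else 0).
  have e1 : \sum_(k in tau) v k = \sum_(k in rho) (if k \in tau then 1 else 0) *: v k.
    rewrite [RHS](eq_bigr (fun k => if k \in tau then v k else 0)); last first.
      by move=> k _; case: ifP; rewrite ?scale1r ?scale0r.
    rewrite -big_mkcondr; apply: eq_bigl => k; rewrite andb_idl //.
    by apply: (subsetP tr).
  have e2 : t *: v x = \sum_(k in rho) (if k == x then t else 0) *: v k.
    rewrite [RHS](eq_bigr (fun k => if k == x then t *: v k else 0)); last first.
      by move=> k _; case: ifP; rewrite ?scale0r.
    rewrite -big_mkcondr (eq_bigl (fun k => k == x)) ?big_pred1_eq // => k.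
    by rewrite andb_idl // => /eqP ->.
  have heq : \sum_(k in rho) c k *: v k = \sum_(k in rho) d k *: v k.
    rewrite -hc scalerN e1 e2 -sumrB; apply: eq_bigr => k _.
    by rewrite scalerBl.
  have := coef_uniq c d (hind _ rK) heq x xr.
  rewrite /d (negPf xt) eqxx sub0r => h.
  have := c0 x xr; rewrite h lerNr oppr0 => ht; move: tp; by rewrite ltNge ht.
case: (eqVneq rho tau) => [e|ne].
  subst rho; exfalso.
  have hi := hind _ xtK.
  pose f k := if k == x then t else c k - 1.
  have h0 : \sum_(k in x |: tau) f k *: v k = 0.
    rewrite big_setU1 //= /f eqxx.
    rewrite (eq_bigr (fun k => c k *: v k - v k)); last first.
      move=> k kt; have -> : (k == x) = false by apply/negP => /eqP ke; move: xt; rewrite -ke kt.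
      by rewrite scalerBl scale1r.
    by rewrite sumrB -hc scalerN addrAC subrr add0r subrr.
  have := hi f h0 x (setU11 _ _); rewrite /f eqxx => /eqP; rewrite gt_eqF //.
have /properP [_ [y yr yt]] : tau \proper rho by rewrite properEneq eq_sym ne tr.
exists y.
  rewrite yt /=; apply: contraNneq xr => <- //.
apply: (hdown rho) => //; apply/subsetP => k; rewrite in_setU1 => /orP [/eqP -> //|kt].
exact: (subsetP tr).
Qed.

Arguments FA_zero {n m K L i j ai aj s}.
Arguments pm {R n m K v} _ _ {tau x}.
Arguments pure {R n m K v} _ {s}.

Lemma flag_pair (m : nat) (K : {set {set 'I_m}}) (s : {set 'I_m}) :
  simplicial_complex K -> flag K -> s \notin K ->
  exists a b, [/\ a \in s, b \in s & [set a; b] \notin K].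
Proof.
move=> [K0 hdown] hfl sK.
pose S := [set t : {set 'I_m} | (t \subset s) && (t \notin K)].
have sS : s \in S by rewrite inE subxx sK.
case: (@arg_minnP _ s (fun t => t \in S) (fun t => #|t|) sS) => t.
rewrite inE => /andP[ts tK] hmin.
have mf : missing_face K t.
  split => // u ut; apply: contraT => uK.
  have := hmin u; rewrite inE (subset_trans (proper_sub ut) ts) uK => /(_ isT).
  have := proper_card ut.
  by move=> h1 h2; move: (leq_trans h1 h2); rewrite ltnn.
have /cards2P [a [b [ab te]]] : #|t| == 2%N by rewrite hfl.
exists a, b; split.
- by apply: (subsetP ts); rewrite te !inE eqxx.
- by apply: (subsetP ts); rewrite te !inE eqxx orbT.
- by rewrite -te.
Qed.

Theorem mainTheorem14 (R : realType) (n m : nat) (K : {set {set 'I_m}})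
    (L : 'M[int]_(n, m)) :
  flag K -> starshaped_sphere R n K -> characteristic_matrix K L ->
  (exists (i j : 'I_m) (ai aj : int), i != j /\
      ai%:MP * 'X_i + aj%:MP * 'X_j != 0 :> {mpoly int[m]} /\
      in_char_ideal L (ai%:MP * 'X_i + aj%:MP * 'X_j)) ->
  suspension K.
Proof.
move=> hfl [hsc hsing [v hf]] hL [i [j [ai [aj [ij [hnz hI]]]]]].
have [K0 hdown] := hsc.
have FA' : forall s, s \in K -> (n <= #|s|)%N -> (i \in s) || (j \in s).
  move=> s sK hn; apply: contraT => /norP [iS jS].
  have a0 := FA_zero hL hI sK hn iS jS ij.
  have hI' : in_char_ideal L (aj%:MP * 'X_j + ai%:MP * 'X_i) by rewrite addrC.
  have b0 := FA_zero hL hI' sK hn jS iS (ltac:(by rewrite eq_sym)).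
  by move: hnz; rewrite a0 b0 mpolyC0 !mul0r addr0 eqxx.
pose av (t : {set 'I_m}) := (i \notin t) && (j \notin t).
have maxext : forall tau, tau \in K -> av tau -> exists tp, [/\ tp \in K, av tp, tau \subset tp &
    forall y, y \notin tp -> y != i -> y != j -> y |: tp \notin K].
  move=> tau tK atau.
  pose S := [set t in K | (tau \subset t) && av t].
  have tS : tau \in S by rewrite inE tK subxx atau.
  case: (@arg_maxnP _ tau (fun t => t \in S) (fun t => #|t|) tS) => tp.
  rewrite inE => /and3P[tpK ttp atp] hmax.
  exists tp; split => // y ytp yi yj; apply/negP => yK.
  have := hmax (y |: tp); rewrite inE yK (subset_trans ttp (subsetUr _ _)) /=.
  have -> : av (y |: tp).
    by move: atp; rewrite /av !in_setU1 (eq_sym i) (eq_sym j) (negPf yi) (negPf yj).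
  by move=> /(_ isT); rewrite cardsU1 ytp ltnn.
have ext : forall tp, tp \in K -> av tp ->
    (forall y, y \notin tp -> y != i -> y != j -> y |: tp \notin K) ->
    (i |: tp \in K) /\ (j |: tp \in K).
  move=> tp tpK atp hmx.
  have sw : forall x y, ((x == i) && (y == j)) || ((x == j) && (y == i)) ->
      x |: tp \in K -> y |: tp \in K.
    move=> x y hxy xK.
    have xtp : x \notin tp.
      by case/orP: hxy => /andP[/eqP -> _]; move: atp => /andP[].
    have [z /andP[ztp zx] zK] := pm hsc hf tpK xtp xK.
    case: (eqVneq z y) => [<- //|zy].
    exfalso; move: zK; apply/negP; apply: hmx => //.
      by case/orP: hxy => /andP[/eqP ex /eqP ey]; rewrite -?ex -?ey.
    by case/orP: hxy => /andP[/eqP ex /eqP ey]; rewrite -?ex -?ey.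
  have [sg sgK /andP[tsg nsg]] := pure hf tpK.
  case/orP: (FA' sg sgK nsg) => [isg|jsg].
    have iK : i |: tp \in K.
      apply: (hdown sg) => //; apply/subsetP => k; rewrite in_setU1 => /orP[/eqP -> //|kt].
      exact: (subsetP tsg).
    by split => //; apply: (sw i) => //; rewrite !eqxx.
  have jK : j |: tp \in K.
    apply: (hdown sg) => //; apply/subsetP => k; rewrite in_setU1 => /orP[/eqP -> //|kt].
    exact: (subsetP tsg).
  by split => //; apply: (sw j) => //; rewrite !eqxx orbT.
have extall : forall t, t \in K -> av t -> (i |: t \in K) /\ (j |: t \in K).
  move=> t tK at_.
  have [tp [tpK atp ttp hmx]] := maxext t tK at_.
  have [iK jK] := ext tp tpK atp hmx.
  split.
    by apply: (hdown _ _ iK); apply: setUS.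
  by apply: (hdown _ _ jK); apply: setUS.
have nij : [set i; j] \notin K.
  apply/negP => ijK.
  have a0 : av set0 by rewrite /av !inE.
  have [tp [tpK atp _ hmx]] := maxext set0 K0 a0.
  have [iK jK] := ext tp tpK atp hmx.
  move: atp => /andP[itp jtp].
  have ijt : j |: (i |: tp) \in K.
    apply: contraT => nK.
    have [a [b [ha hb hab]]] := flag_pair _ _ _ hsc hfl nK.
    suff : [set a; b] \in K by rewrite (negPf hab).
    have pK : forall X, X \in K -> a \in X -> b \in X -> [set a; b] \in K.
      move=> X XK aX bX; apply: (hdown X) => //; apply/subsetP => k.
      by rewrite !inE => /orP[/eqP ->|/eqP ->].
    move: ha hb; rewrite !in_setU1 => /or3P[/eqP ea|/eqP ea|ea] /or3P[/eqP eb|/eqP eb|eb].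
    all: try by rewrite ea eb.
    all: try by rewrite ea eb setUC.
    all: try by apply: (pK _ jK); rewrite !in_setU1 ?ea ?eb ?eqxx ?orbT.
    all: try by apply: (pK _ iK); rewrite !in_setU1 ?ea ?eb ?eqxx ?orbT.
  have jn : j \notin i |: tp by rewrite in_setU1 negb_or eq_sym ij jtp.
  have [y /andP[yt yj] yK] := pm hsc hf iK jn ijt.
  move: yt; rewrite in_setU1 negb_or => /andP[yi ytp].
  have : y |: tp \in K.
    apply: (hdown _ _ yK); apply/subsetP => k; rewrite !in_setU1 => /orP[->//|->].
    by rewrite !orbT.
  by apply/negP; apply: hmx.
exists i, j; split => //; split => //.
exists [set t in K | av t]; split.
  split; first by rewrite inE K0 /av !inE.
  move=> s t; rewrite !inE => /andP[sK /andP[is0 js0]] ts.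
  rewrite (hdown _ _ sK ts) /=; apply/andP; split.
    by apply/negP => it; move/negP: is0; apply; exact: (subsetP ts).
  by apply/negP => jt; move/negP: js0; apply; exact: (subsetP ts).
split.
  move=> t; rewrite inE => /andP[_ /andP[it jt]].
  rewrite -setI_eq0; apply/eqP/setP => k; rewrite !inE; apply/negbTE/negP.
  move=> /andP[kt /orP[/eqP e|/eqP e]]; subst k.
    by rewrite kt in it.
  by rewrite kt in jt.
apply/setP => s; apply/idP/idP.
  move=> sK; apply/imset2P.
  exists (s :&: [set i; j]) (s :\: [set i; j]).
  - by rewrite inE (hdown _ _ sK (subsetIl _ _)) subsetIr.
  - by rewrite inE (hdown _ _ sK (subsetDl _ _)) /av !inE !eqxx /= ?orbT.
  - by rewrite setID.
case/imset2P => s1 t; rewrite !inE => /andP[s1K s1ij] /andP[tK at_] ->.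
have [iK jK] := extall t tK at_.
have s1sub : forall k, k \in s1 -> (k == i) || (k == j).
  by move=> k ks; move: (subsetP s1ij k ks); rewrite !inE.
case: (boolP (i \in s1)) => is1; case: (boolP (j \in s1)) => js1.
- exfalso; move/negP: nij; apply; apply: (hdown _ _ s1K).
  by apply/subsetP => k; rewrite !inE => /orP[/eqP ->|/eqP ->].
- apply: (hdown _ _ iK); apply/subsetP => k; rewrite !inE => /orP[ks|->]; last by rewrite orbT.
  by case/orP: (s1sub k ks) => /eqP e; subst k; rewrite ?eqxx //; move: js1; rewrite ks.
- apply: (hdown _ _ jK); apply/subsetP => k; rewrite !inE => /orP[ks|->]; last by rewrite orbT.
  by case/orP: (s1sub k ks) => /eqP e; subst k; rewrite ?eqxx //; move: is1; rewrite ks.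
- apply: (hdown _ _ jK); apply/subsetP => k; rewrite !inE => /orP[ks|->]; last by rewrite orbT.
  by case/orP: (s1sub k ks) => /eqP e; subst k; move: is1 js1; rewrite ks.
Qed.
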